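(* Let $N\ge2$, $d\ge1$, $1\le p\le q\le\infty$, and let $S\subset\mathbb{Z}_N^d$ be a nonempty set for which a $(p,q)$-restriction estimate holds with constant $C_{p,q}>0$. Let $f:\mathbb{Z}_N^d\to\mathbb{C}$ be supported in $E\subset\mathbb{Z}_N^d$, and suppose $$|E|^{1/p}\cdot|S|<\frac{N^d}{2^{1/p}C_{p,q}}.$$ Then $f$ is uniquely determined by the values $\hat f(m)$, $m\notin S$, among signals with at most $|E|$ nonzero entries: if $g:\mathbb{Z}_N^d\to\mathbb{C}$ satisfies $|\{x:g(x)\ne0\}|\le|E|$ and $\hat g(m)=\hat f(m)$ for all $m\notin S$, then $g=f$.
   Context: $\chi(t)=e^{2\pi i t/N}$, $\hat f(m)=N^{-d}\sum_{x\in\mathbb{Z}_N^d}\chi(-x\cdot m)f(x)$. A $(p,q)$-restriction estimate holds for a nonempty $S\subset\mathbb{Z}_N^d$ with constant $C_{p,q}$ if for every $h:\mathbb{Z}_N^d\to\mathbb{C}$, $\big(\frac{1}{|S|}\sum_{m\in S}|\hat h(m)|^q\big)^{1/q}\le C_{p,q}N^{-d}\big(\sum_x|h(x)|^p\big)^{1/p}$ (for $q=\infty$ the left side is $\max_{m\in S}|\hat h(m)|$). The set $S$ is the set of unobserved frequencies. *)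

(* Defs.v *)
From HB Require Import structures.
From mathcomp Require Import all_boot all_order all_algebra.
From mathcomp Require Import all_classical all_reals all_analysis.
From mathcomp Require Import complex.
Set Implicit Arguments. Unset Strict Implicit. Unset Printing Implicit Defensive.
Import Order.TTheory GRing.Theory Num.Theory.
Local Open Scope ring_scope.

Definition ZNd (N d : nat) := {ffun 'I_d -> 'I_N}.

(* dot product x . m (an integer; only its class mod N matters for chi) *)
Definition dotZ (N d : nat) (x m : ZNd N d) : nat := (\sum_(i < d) x i * m i)%N.

Section Fourier.
Variable R : realType.

Definition cmod (z : R[i]) : R := ComplexField.Normc.normc z.

Definition chi (N : nat) (t : R) : R[i] :=
  Complex (cos (2 * pi * t / N%:R)) (sin (2 * pi * t / N%:R)).

Definition fhat (N d : nat) (f : ZNd N d -> R[i]) (m : ZNd N d) : R[i] :=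
  ((N%:R ^- d : R)%:C * \sum_(x : ZNd N d) chi N (- (dotZ x m)%:R) * f x)%C.

(* exponents p in [1, +oo] are extended reals; 1/p, with 1/+oo = 0 *)
Definition einv (p : \bar R) : R :=
  match p with EFin r => r^-1 | _ => 0 end.

Definition lpnorm (T : finType) (p : \bar R) (h : T -> R[i]) : R :=
  match p with
  | EFin r => (\sum_(x : T) cmod (h x) `^ r) `^ (r^-1)
  | _ => \big[Num.max/0]_(x : T) cmod (h x)
  end.

Definition avg_qnorm (T : finType) (q : \bar R) (S : {set T}) (h : T -> R[i]) : R :=
  match q with
  | EFin r => ((#|S|%:R)^-1 * \sum_(m in S) cmod (h m) `^ r) `^ (r^-1)
  | _ => \big[Num.max/0]_(m in S) cmod (h m)
  end.

Definition restriction_estimate (N d : nat) (p q : \bar R) (S : {set ZNd N d}) (C : R) : Prop :=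
  forall h : ZNd N d -> R[i],
    avg_qnorm q S (fhat h) <= C * (N%:R ^- d) * lpnorm p h.

End Fourier.

(* Main.v *)
Require Import Defs.
From HB Require Import structures.
From mathcomp Require Import all_boot all_order all_algebra.
From mathcomp Require Import all_classical all_reals all_analysis.
From mathcomp Require Import complex.
From mathcomp Require Import ring lra.
Import Order.TTheory GRing.Theory Num.Theory.
Local Open Scope ring_scope.

Section Aux.
Variable R : realType.
Local Open Scope complex_scope.

Lemma cmod_ge0 (z : R[i]) : 0 <= cmod z.
Proof. by case: z => a b; rewrite /cmod /= sqrtr_ge0. Qed.

Lemma chiD N (a b : R) : chi N (a + b) = chi N a * chi N b.
Proof.
rewrite /chi.
have -> : 2 * pi * (a + b) / N%:R = 2 * pi * a / N%:R + 2 * pi * b / N%:R.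
  by rewrite mulrDr mulrDl.
rewrite cosD sinD /=.
congr Complex; ring.
Qed.

Lemma chi0 N : chi N (0:R) = 1.
Proof. by rewrite /chi mulr0 mul0r cos0 sin0. Qed.

Lemma cmod_chi N (t : R) : cmod (chi N t) = 1.
Proof. by rewrite /cmod /chi /= cos2Dsin2 sqrtr1. Qed.

Lemma chi_natM N (a : R) k : chi N (a * k%:R) = chi N a ^+ k.
Proof.
elim: k => [|k IH]; first by rewrite mulr0 chi0 expr0.
by rewrite -natr1 mulrDr mulr1 chiD IH exprSr.
Qed.

Lemma cos_2pin (n : nat) : cos (pi *+ 2 * n%:R) = 1 :> R /\ sin (pi *+ 2 * n%:R) = 0 :> R.
Proof.
elim: n => [|n [IHc IHs]]; first by rewrite mulr0 cos0 sin0.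
by rewrite -natr1 mulrDr mulr1 cosD2pi sinD2pi IHc IHs.
Qed.

Lemma chi_period N (u v : nat) : (0 < N)%N -> chi N ((u%:R - v%:R) * N%:R : R) = 1.
Proof.
move=> N0.
have N0' : (N%:R : R) != 0 by rewrite pnatr_eq0 -lt0n.
rewrite /chi.
have -> : 2 * pi * ((u%:R - v%:R) * N%:R) / N%:R = pi *+ 2 * u%:R - pi *+ 2 * v%:R :> R.
  by field.
have [cu su] := cos_2pin u; have [cv sv] := cos_2pin v.
rewrite cosB sinB cu su cv sv.
apply/eqP; rewrite eq_complex /=; apply/andP; split; apply/eqP; ring.
Qed.

Lemma chi_ne1 N (a : R) : a != 0 -> `|a| < N%:R -> chi N a != 1.
Proof.
move=> a0 aN.
have N0 : (0 : R) < N%:R by apply: le_lt_trans aN.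
suff : cos (2 * pi * a / N%:R) < 1.
  apply: contraTN => /eqP; rewrite /chi; case=> -> _; by rewrite ltxx.
rewrite -cos_norm.
set s := `|2 * pi * a / N%:R| / 2.
have -> : `|2 * pi * a / N%:R| = s *+ 2 by rewrite /s; field.
have spos : 0 < s < pi.
  have pip : 0 < pi :> R by exact: pi_gt0.
  have ap : 0 < `|a| by rewrite normr_gt0.
  have -> : s = pi * (`|a| / N%:R).
    rewrite /s !normrM normfV (ger0_norm (ltW N0)) (ger0_norm (ltW pip)).
    rewrite (ger0_norm (x:=2)) //; field; by rewrite gt_eqF.
  apply/andP; split; first by rewrite mulr_gt0 // divr_gt0.
  rewrite -{2}(mulr1 pi) ltr_pM2l // ltr_pdivrMr // mul1r //.
have := sin_gt0_pi spos => sp.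
rewrite cos_mulr2n cos2sin2.
have : 0 < sin s ^+ 2 by rewrite exprn_gt0.
lra.
Qed.


Lemma cmod_sum (I : Type) (r : seq I) (P : pred I) (F : I -> R[i]) :
  cmod (\sum_(i <- r | P i) F i) <= \sum_(i <- r | P i) cmod (F i).
Proof.
elim/big_rec2: _ => [|i y z _ Hyz]; first by rewrite /cmod /= expr0n /= addr0 sqrtr0.
apply: le_trans (le_normcD _ _) _; by rewrite lerD2l.
Qed.

Lemma cmodM (x y : R[i]) : cmod (x * y) = cmod x * cmod y.
Proof. exact: Normc.normcM. Qed.

Lemma sum1D N (u v : nat) : (u < N)%N -> (v < N)%N ->
  \sum_(k < N) chi N ((u%:R - v%:R) * k%:R : R) = if u == v then N%:R else 0.
Proof.
move=> uN vN.
have [->|uv] := eqVneq u v.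
  under eq_bigr do rewrite subrr mul0r chi0.
  by rewrite sumr_const card_ord.
set w := chi N (u%:R - v%:R : R).
under eq_bigr do rewrite chi_natM.
have N0 : (0 < N)%N by apply: leq_ltn_trans uN.
have wN : w ^+ N = 1 by rewrite /w -chi_natM chi_period.
have w1 : w - 1 != 0.
  rewrite subr_eq0 chi_ne1 //; first by rewrite subr_eq0 eqr_nat.
  have := uN; have := vN; rewrite -!(ltr_nat R) => h1 h2.
  have h3 : (0:R) <= u%:R by []. have h4 : (0:R) <= v%:R by [].
  rewrite ltr_norml; apply/andP; split; lra.
have := subrX1 w N; rewrite wN subrr => /esym/eqP; rewrite mulf_eq0 (negbTE w1) /=.
by move/eqP.
Qed.


Lemma chi_sum N (I : Type) (r : seq I) (P : pred I) (F : I -> R) :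
  chi N (\sum_(i <- r | P i) F i) = \prod_(i <- r | P i) chi N (F i).
Proof. exact: (big_morph (chi N) (chiD N) (chi0 N)). Qed.

Lemma orth N d (x0 x : ZNd N d) :
  \sum_(m : ZNd N d) chi N ((dotZ x0 m)%:R - (dotZ x m)%:R : R)
  = if x0 == x then N%:R ^+ d else 0.
Proof.
have E : forall m : ZNd N d, ((dotZ x0 m)%:R - (dotZ x m)%:R : R)
   = \sum_i ((x0 i)%:R - (x i)%:R) * (m i)%:R.
  by move=> m; rewrite /dotZ !natr_sum -sumrB; apply: eq_bigr => i _; rewrite !natrM mulrBl.
under eq_bigr do rewrite E chi_sum.
rewrite -(bigA_distr_bigA (fun i (k : 'I_N) => chi N (((x0 i)%:R - (x i)%:R) * (k : nat)%:R))).
under eq_bigr do rewrite sum1D //.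
have [->|nx] := eqVneq x0 x.
  under eq_bigr do rewrite eqxx.
  by rewrite prodr_const card_ord.
have [i ni] : exists i, x0 i != x i.
  apply/existsP; move: nx; apply: contraNT; rewrite negb_exists => /forallP H.
  by apply/eqP/ffunP => i; apply/eqP; move: (H i); rewrite negbK.
rewrite (bigD1 i) //= ifN ?mul0r //; exact: ni.
Qed.

Lemma inversion N d (h : ZNd N d -> R[i]) (x0 : ZNd N d) : (0 < N)%N ->
  \sum_(m : ZNd N d) chi N ((dotZ x0 m)%:R) * fhat h m = h x0.
Proof.
move=> N0.
rewrite /fhat.
under eq_bigr do rewrite mulr_sumr mulr_sumr.
rewrite exchange_big /=.
have E : forall x, \sum_(m : ZNd N d) chi N (dotZ x0 m)%:R *
     ((N%:R ^- d : R)%:C * (chi N (- (dotZ x m)%:R) * h x))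
   = ((N%:R ^- d : R)%:C * h x) * \sum_(m : ZNd N d) chi N ((dotZ x0 m)%:R - (dotZ x m)%:R : R).
  move=> x; rewrite mulr_sumr; apply: eq_bigr => m _; rewrite chiD; ring.
under eq_bigr do rewrite E orth.
rewrite (bigD1 x0) //= eqxx big1 ?addr0; last first.
  by move=> x /negbTE; rewrite eq_sym => ->; rewrite mulr0.
have -> : (N%:R ^+ d : R[i]) = ((N%:R ^+ d : R))%:C by rewrite rmorphXn rmorph_nat.
rewrite mulrAC -rmorphM mulVf ?rmorph1 ?mul1r //.
by rewrite expf_neq0 // pnatr_eq0 -lt0n.
Qed.


Lemma power_mean (T : finType) (r : R) (S : {set T}) (a : T -> R) :
  1 <= r -> (0 < #|S|)%N -> (forall m, 0 <= a m) ->
  \sum_(m in S) a m <= #|S|%:R * ((#|S|%:R)^-1 * \sum_(m in S) a m `^ r) `^ r^-1.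
Proof.
move=> r1 S0 a0.
have r0 : 0 < r by apply: lt_le_trans r1.
have n0 : (0:R) < #|S|%:R by rewrite ltr0n.
set n := (#|S|%:R : R).
set B := n^-1 * \sum_(m in S) a m `^ r.
have B0 : 0 <= B.
  apply: mulr_ge0; [by rewrite invr_ge0 ltW | apply: sumr_ge0 => m _; exact: powR_ge0].
set A := B `^ r^-1.
have [A0|Anz] := eqVneq A 0.
  have : B = 0 by apply: (powR_eq0_eq0 A0).
  move/eqP; rewrite /B mulf_eq0 invr_eq0 gt_eqF //= => /eqP Hs.
  rewrite A0 mulr0 le_eqVlt; apply/orP; left; apply/eqP.
  apply: big1 => m mS.
  have := psumr_eq0P (fun i _ => powR_ge0 (a i) r) Hs mS.
  by move/powR_eq0_eq0.
have Ap : 0 < A by rewrite lt_def Anz powR_ge0.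
have Ar : A `^ r = B by rewrite /A -powRrM mulVf ?gt_eqF // powRr1.
have [r1e|r1'] := eqVneq r 1.
  rewrite /A /B r1e invr1 powRr1; last by rewrite -r1e.
  under [X in _ <= n * (_ * X)]eq_bigr do rewrite powRr1 //.
  by rewrite mulrA mulfV ?gt_eqF // mul1r.
have r1s : 1 < r by rewrite lt_neqAle eq_sym r1' r1.
set s := r / (r - 1).
have s0 : 0 < s by rewrite /s divr_gt0 // subr_gt0.
have rs : r^-1 + s^-1 = 1.
  rewrite /s invf_div; field; rewrite ?gt_eqF // subr_gt0 //.
have Y : forall m, a m / A <= (a m `^ r / B) / r + s^-1.
  move=> m.
  have iA : 0 <= A^-1 by rewrite invr_ge0 ltW.
  have H := conjugate_powR (divr_ge0 (a0 m) (ltW Ap)) (@ler01 R) r0 s0 rs.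
  rewrite mulr1 powR1 div1r (powRM r (a0 m) iA) in H.
  suff E : A^-1 `^ r = B^-1 by rewrite -E.
  have Bnz : B != 0 by rewrite -Ar powR_eq0 negb_and Anz.
  apply: (@mulIf _ B) => //.
  by rewrite mulVf // -Ar -(powRM r iA (ltW Ap)) mulVf // powR1.
have : \sum_(m in S) a m / A <= \sum_(m in S) ((a m `^ r / B) / r + s^-1).
  by apply: ler_sum => m _; exact: Y.
rewrite big_split /= sumr_const -!mulr_suml.
have Bn : \sum_(i in S) a i `^ r = n * B by rewrite /B mulrA mulfV ?gt_eqF // mul1r.
rewrite Bn mulfK; last by rewrite -Ar powR_eq0 negb_and Anz.
rewrite -mulr_natl -/n -mulrDr rs mulr1.
by rewrite ler_pdivrMr.
Qed.


Lemma bigmax_cmod_ge0 (T : finType) (h : T -> R[i]) : 0 <= \big[Num.max/0]_x cmod (h x).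
Proof. exact: bigmax_ge_id. Qed.

Lemma lp_bound (T : finType) (p : \bar R) (h : T -> R[i]) (k : nat) :
  (1 <= p)%E -> (#|[set x | h x != 0%R]| <= k)%N ->
  lpnorm p h <= (k%:R : R) `^ (einv p) * \big[Num.max/0]_x cmod (h x).
Proof.
set M := \big[Num.max/0]_x cmod (h x).
have M0 : 0 <= M by exact: bigmax_cmod_ge0.
case: p => [r||] //= r1 hk; last by rewrite powRr0 mul1r.
rewrite lee_fin in r1.
have r0 : 0 < r by apply: lt_le_trans r1.
have S1 : \sum_x cmod (h x) `^ r <= k%:R * M `^ r.
  apply: (@le_trans _ _ (\sum_x (if h x != 0%R then M `^ r else 0))).
    apply: ler_sum => x _; case: ifPn => [_|].
      apply: (ge0_ler_powR (ltW r0)); rewrite ?nnegrE ?cmod_ge0 //.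
      rewrite /M; apply: le_bigmax.
    rewrite negbK => /eqP ->.
    by rewrite /cmod /= expr0n /= addr0 sqrtr0 powR0 ?gt_eqF.
  rewrite -big_mkcond /= sumr_const -[M `^ r *+ _]mulr_natl.
  apply: ler_wpM2r; first exact: powR_ge0.
  rewrite ler_nat; apply: leq_trans hk.
  by rewrite cardsE.
apply: (@le_trans _ _ ((k%:R * M `^ r) `^ r^-1)).
  apply: ge0_ler_powR; rewrite ?nnegrE ?invr_ge0 ?(ltW r0) //.
    by apply: sumr_ge0 => x _; exact: powR_ge0.
  by rewrite mulr_ge0 ?powR_ge0.
rewrite powRM ?powR_ge0 // -powRrM mulfV ?gt_eqF // powRr1 //.
Qed.

Lemma avg_bound (T : finType) (q : \bar R) (S : {set T}) (F : T -> R[i]) :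
  (1 <= q)%E -> (0 < #|S|)%N ->
  \sum_(m in S) cmod (F m) <= #|S|%:R * avg_qnorm q S F.
Proof.
case: q => [r||] //= q1 S0.
  rewrite lee_fin in q1.
  apply: power_mean => // m; exact: cmod_ge0.
apply: (@le_trans _ _ (\sum_(m in S) \big[Num.max/0]_(m in S) cmod (F m))).
  apply: ler_sum => m mS; exact: (le_bigmax_cond _ (fun m => cmod (F m)) mS).
by rewrite sumr_const mulr_natl.
Qed.

End Aux.

Theorem corollary4 (R : realType) (N d : nat) (p q : \bar R)
  (S : {set ZNd N d}) (C : R) (f : ZNd N d -> R[i]) (E : {set ZNd N d}) :
  (2 <= N)%N -> (1 <= d)%N ->
  (1 <= p)%E -> (p <= q)%E ->
  (0 < #|S|)%N -> 0 < C ->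
  restriction_estimate p q S C ->
  (forall x, x \notin E -> f x = 0) ->
  (#|E|%:R : R) `^ (einv p) * #|S|%:R < N%:R ^+ d / (2 `^ (einv p) * C) ->
  forall g : ZNd N d -> R[i],
    (#|[set x | g x != 0%R]| <= #|E|)%N ->
    (forall m, m \notin S -> fhat g m = fhat f m) ->
    g = f.
Proof.
move=> N2 d1 p1 pq S0 C0 Hrest Hf Hineq g Hg Hfh.
have N0 : (0 < N)%N by apply: leq_trans N2.
pose h := fun x => g x - f x.
have fhatB : forall m, fhat h m = fhat g m - fhat f m.
  move=> m; rewrite /fhat -mulrBr -sumrB; congr (_ * _).
  by apply: eq_bigr => x _; rewrite mulrBr.
have hS : forall m, m \notin S -> fhat h m = 0.
  by move=> m mS; rewrite fhatB Hfh // subrr.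
have supp : (#|[set x | h x != 0%R]| <= #|E| + #|E|)%N.
  apply: (@leq_trans #|[set x | g x != 0%R] :|: E|).
    apply: subset_leq_card; apply/fintype.subsetP => x; rewrite !inE.
    case: (boolP (x \in E)) => xE; rewrite ?orbT //= orbF.
    by apply: contra => /eqP g0; rewrite /h g0 Hf // subrr.
  apply: leq_trans (leq_card_setU _ _).1 _.
  by rewrite leq_add2r.
have q1 : (1 <= q)%E by apply: le_trans pq.
set A := avg_qnorm q S (fhat h).
set L := lpnorm p h.
set M := \big[Num.max/0]_x cmod (h x).
have M0 : 0 <= M by exact: bigmax_cmod_ge0.
have Hx : forall x0, cmod (h x0) <= #|S|%:R * A.
  move=> x0; rewrite -(@inversion R N d h x0 N0).
  apply: le_trans (cmod_sum _ _ _ _ _) _.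
  under eq_bigr do rewrite cmodM cmod_chi mul1r.
  rewrite (bigID (fun m => m \in S)) /= [X in _ + X]big1 ?addr0; last first.
    by move=> m /hS ->; rewrite /cmod /= expr0n/= addr0 sqrtr0.
  exact: avg_bound.
have HA : A <= C * N%:R ^- d * L := Hrest h.
have HL : L <= ((#|E| + #|E|)%N%:R : R) `^ einv p * M := @lp_bound R _ p h _ p1 supp.
set e := einv p.
have E2 : ((#|E| + #|E|)%N%:R : R) = 2 * #|E|%:R by rewrite natrD; ring.
rewrite E2 powRM // in HL.
set K := #|S|%:R * (C * N%:R ^- d) * (2 `^ e * #|E|%:R `^ e).
have Nd : (0 : R) < N%:R ^+ d by rewrite exprn_gt0 // ltr0n.
have Sp : (0 : R) < #|S|%:R by rewrite ltr0n.
have HM : M <= K * M.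
  have K0 : 0 <= K by rewrite /K !mulr_ge0 ?powR_ge0 ?invr_ge0 ?(ltW C0) ?(ltW Nd) //.
  apply: bigmax_le; first by rewrite mulr_ge0.
  move=> x _; apply: le_trans (Hx x) _.
  rewrite /K -!mulrA ler_pM2l // mulrA.
  apply: le_trans HA _.
  by rewrite ler_pM2l ?mulr_gt0 ?invr_gt0 // mulrA.
have P2 : 0 < 2 `^ e * C by rewrite mulr_gt0 // powR_gt0.
rewrite ltr_pdivlMr // in Hineq.
have K1 : K < 1.
  have -> : K = #|E|%:R `^ e * #|S|%:R * (2 `^ e * C) / N%:R ^+ d by rewrite /K; ring.
  by rewrite ltr_pdivrMr // mul1r.
have M00 : M <= 0 by nra.
apply: funext => x.
have : cmod (h x) <= 0.
  apply: le_trans M00; rewrite /M; apply: le_bigmax.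
move=> hx; have : cmod (h x) = 0 by apply/eqP; rewrite eq_le hx cmod_ge0.
move/Normc.eq0_normc; rewrite /h => /eqP; rewrite subr_eq0 => /eqP.
done.
Qed.
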